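(* Let $G$ be a torsion-free abelian group and $H$ any group. Then every non-constant $\mathcal{T}\in\mathrm{GCA}(A^G,A^H)$ has the unique homomorphism property.
   Context: $A$ is a finite set with $|A|\ge 2$. $A^G$ is the set of functions $G\to A$ with shift action $(g\cdot x)(k):=x(g^{-1}k)$. For $\phi\in\mathrm{Hom}(H,G)$, a $\phi$-cellular automaton is a map $\mathcal{T}:A^G\to A^H$ for which there exist finite $T\subseteq G$ and $\mu:A^T\to A$ with $\mathcal{T}(x)(h)=\mu((\phi(h^{-1})\cdot x)|_T)$ for all $x,h$; $\mathrm{GCA}(A^G,A^H)$ is the set of all $\phi$-cellular automata $A^G\to A^H$ over all $\phi\in\mathrm{Hom}(H,G)$, and $\mathrm{CA}(A^G)$ is the set of $\mathrm{id}_G$-cellular automata. $\phi^*(x):=x\circ\phi$. $\mathcal{T}\in\mathrm{GCA}(A^G,A^H)$ has the unique homomorphism property (UHP) if $\mathcal{T}=\phi^*\circ\tau=\psi^*\circ\tau$ with $\phi,\psi\in\mathrm{Hom}(H,G)$, $\tau\in\mathrm{CA}(A^G)$ implies $\phi=\psi$ (every $\phi$-cellular automaton can be written as $\phi^*\circ\tau$ for a unique $\tau\in\mathrm{CA}(A^G)$). *)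

(* Defs.v *)
(* G : zmodType (additive abelian group), H : groupType
   (general, possibly infinite, group from mathcomp boot/monoid.v). *)
From HB Require Import structures.
From mathcomp Require Import all_boot all_order all_algebra.
Set Implicit Arguments.
Unset Strict Implicit.
Unset Printing Implicit Defensive.
Import GRing.Theory.

Local Open Scope ring_scope.

Definition torsion_free (G : zmodType) : Prop :=
  forall (g : G) (n : nat), (0 < n)%N -> g *+ n = 0 -> g = 0.

Definition is_hom (H : groupType) (G : zmodType) (phi : H -> G) : Prop :=
  forall a b : H, phi (a * b)%g = phi a + phi b.

Definition shift (G : zmodType) (A : Type) (g : G) (x : G -> A) : G -> A :=
  fun k => x (- g + k).

Definition cfg_restr (G : zmodType) (A : Type) (T : seq G) (x : G -> A)
  : {k : G | k \in T} -> A := fun k => x (val k).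
Arguments cfg_restr {G A} T x k.

Definition is_phiCA (H : groupType) (G : zmodType) (A : finType)
  (phi : H -> G) (Tm : (G -> A) -> (H -> A)) : Prop :=
  exists (T : seq G) (mu : ({k : G | k \in T} -> A) -> A),
    forall (x : G -> A) (h : H), Tm x h = mu (cfg_restr T (shift (phi (h^-1)%g) x)).

Definition is_GCA (H : groupType) (G : zmodType) (A : finType)
  (Tm : (G -> A) -> (H -> A)) : Prop :=
  exists phi : H -> G, is_hom phi /\ is_phiCA phi Tm.

(* CA(A^G): the id_G-cellular automata, G viewed as group under + *)
Definition is_CA (G : zmodType) (A : finType) (tau : (G -> A) -> (G -> A)) : Prop :=
  exists (T : seq G) (mu : ({k : G | k \in T} -> A) -> A),
    forall (x : G -> A) (g : G), tau x g = mu (cfg_restr T (shift (- g) x)).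

Definition pullback (H : groupType) (G : zmodType) (A : Type) (phi : H -> G)
  (x : G -> A) : H -> A := x \o phi.

Definition UHP (H : groupType) (G : zmodType) (A : finType)
  (Tm : (G -> A) -> (H -> A)) : Prop :=
  forall (phi psi : H -> G) (tau : (G -> A) -> (G -> A)),
    is_hom phi -> is_hom psi -> is_CA tau ->
    Tm = pullback phi \o tau -> Tm = pullback psi \o tau -> phi = psi.

Definition nonconstant (X Y : Type) (f : X -> Y) : Prop :=
  exists x y : X, f x <> f y.

(* Main.v *)
Require Import Defs.
From HB Require Import structures.
From mathcomp Require Import all_boot all_order all_algebra.
From Stdlib Require Import FunctionalExtensionality Classical.
Set Implicit Arguments.
Unset Strict Implicit.
Unset Printing Implicit Defensive.
Import GRing.Theory.
Local Open Scope ring_scope.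

Lemma CA_rep (G : zmodType) (A : finType) (tau : (G -> A) -> (G -> A)) T mu :
  (forall (x : G -> A) (g : G), tau x g = mu (cfg_restr T (shift (- g) x))) ->
  forall x g, tau x g = mu (fun k : {k : G | k \in T} => x (g + val k)).
Proof.
move=> E x g; rewrite E; congr mu; apply: functional_extensionality => k.
by rewrite /cfg_restr /shift opprK.
Qed.

Lemma exists_shift (G : zmodType) (T : seq G) (d : G) :
  torsion_free G -> d != 0 ->
  exists n : nat, forall t1 t2, t1 \in T -> t2 \in T -> t2 + d *+ n != t1.
Proof.
move=> tf dn0.
set S := [seq t1 - t2 | t1 <- T, t2 <- T].
set s := map (fun n => d *+ n) (iota 0 (size S).+1).
have us : uniq s.
  rewrite map_inj_in_uniq ?iota_uniq // => m n _ _ Emn.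
  wlog lmn : m n Emn / (m <= n)%N.
    by move=> W; case: (leqP m n) => [|/ltnW] h; [|symmetry]; apply: W.
  apply/eqP; rewrite eqn_leq lmn /=; apply/negP => /negP; rewrite -ltnNge => ltmn.
  have : d *+ (n - m) = 0 by rewrite mulrnBr // Emn subrr.
  have pos : (0 < n - m)%N by rewrite subn_gt0.
  by move/(tf _ _ pos); apply/eqP.
have : ~~ all (mem S) s.
  apply/negP => /allP sub; have := uniq_leq_size us sub.
  by rewrite size_map size_iota ltnn.
case/allPn => v /mapP [n _ ->] nS; exists n => t1 t2 h1 h2.
apply/negP => /eqP E; apply: (negP nS); apply/allpairsP; exists (t1, t2) => /=.
by rewrite h1 h2; split => //; rewrite -E addrAC subrr add0r.
Qed.

Theorem corollary3p10 (A : finType) (G : zmodType) (H : groupType) :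
  (1 < #|A|)%N -> torsion_free G ->
  forall Tm : (G -> A) -> (H -> A),
    is_GCA Tm -> nonconstant Tm -> UHP Tm.
Proof.
move=> _ tf Tm _ [x0 [y0 Nxy]] phi psi tau _ _ [T [mu Emu]] Ephi Epsi.
have R := CA_rep Emu.
have Sh : forall a x g, tau (shift a x) g = tau x (g - a).
  move=> a x g; rewrite !R; congr mu; apply: functional_extensionality => k.
  rewrite /shift; congr x; by rewrite addrCA addrA.
apply: functional_extensionality => h0.
case: (eqVneq (psi h0 - phi h0) 0) => [/eqP|dn0]; first by rewrite subr_eq0 => /eqP.
exfalso; set d := psi h0 - phi h0 in dn0.
have P0 : forall x h, tau x (phi h) = tau x (psi h).
  move=> x h; have := congr1 (fun f => f x h) Ephi; have := congr1 (fun f => f x h) Epsi.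
  by rewrite /= /pullback /= => -> .
have Per : forall x g, tau x (g + d) = tau x g.
  move=> x g; set a := phi h0 - g.
  have e1 : tau x g = tau (shift a x) (phi h0) by rewrite Sh /a; congr (tau x); rewrite opprB addrCA subrr addr0.
  have e2 : tau x (g + d) = tau (shift a x) (psi h0).
    by rewrite Sh /a /d; congr (tau x); rewrite opprB addrCA addrA.
  by rewrite e1 e2 P0.
have PerN : forall x g n, tau x (g + d *+ n) = tau x g.
  move=> x g; elim=> [|n IH]; first by rewrite mulr0n addr0.
  by rewrite mulrSr addrA Per.
have [h1 Nh] : exists h, Tm x0 h <> Tm y0 h.
  apply: NNPP => Hn; apply: Nxy; apply: functional_extensionality => h.
  by apply: NNPP => Hh; apply: Hn; exists h.
set g0 := phi h1.
have Ng : tau x0 g0 <> tau y0 g0.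
  by move: Nh; rewrite Ephi /= /pullback.
have [n Hn] := exists_shift T tf dn0.
pose z := fun k : G => if k \in T then x0 (g0 + k) else y0 (g0 + (k - d *+ n)).
apply: Ng.
have -> : tau x0 g0 = tau z 0.
  rewrite !R; congr mu; apply: functional_extensionality => k.
  by rewrite /z add0r (valP k).
have -> : tau y0 g0 = tau z (0 + d *+ n).
  rewrite !R; congr mu; apply: functional_extensionality => k.
  rewrite /z add0r; case: ifP => [hk|_].
    by have := Hn _ _ hk (valP k); rewrite addrC eqxx.
  by congr y0; rewrite addrAC subrr add0r.
by rewrite PerN.
Qed.
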